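(* Let $p$ be a prime, $n\geq1$ an integer and $\alpha\in\mathbb{Z}_p$. Then $\mathfrak{M}_{p,\alpha}^n\cap\mathbb{Z}[X]=(p^n,X-a)$, where $a\in\mathbb{Z}$ is any integer with $\alpha\equiv a\pmod{p^n}$. This ideal is $(p,X-j)$-primary, where $j\in\{0,\dots,p-1\}$, $j\equiv\alpha\pmod p$. Moreover, for $\beta\in\mathbb{Z}_p$, $\mathfrak{M}_{p,\alpha}^n\cap\mathbb{Z}[X]=\mathfrak{M}_{p,\beta}^n\cap\mathbb{Z}[X]$ if and only if $\alpha\equiv\beta\pmod{p^n}$.
   Context: $\mathrm{Int}(\mathbb{Z})=\{f\in\mathbb{Q}[X] : f(\mathbb{Z})\subseteq\mathbb{Z}\}$; $\mathbb{Z}_p$ is the ring of $p$-adic integers; $\mathfrak{M}_{p,\alpha}=\{f\in\mathrm{Int}(\mathbb{Z}) : f(\alpha)\in p\mathbb{Z}_p\}$ and $\mathfrak{M}_{p,\alpha}^n$ is its $n$-th power as an ideal of $\mathrm{Int}(\mathbb{Z})$. It is known (Loper) that $\mathfrak{M}_{p,\alpha}^n=\{f\in\mathrm{Int}(\mathbb{Z}) : f(\alpha)\in p^n\mathbb{Z}_p\}$. *)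

(* Defs.v *)
From HB Require Import structures.
From mathcomp Require Import all_boot all_order all_algebra.
Set Implicit Arguments. Unset Strict Implicit. Unset Printing Implicit Defensive.
Import Order.TTheory GRing.Theory Num.Theory.
Local Open Scope ring_scope.

(* p-adic integers Z_p, modelled as coherent sequences of integer
   approximations: zp_seq a k is an integer congruent to a modulo p^k. *)
Record padic (p : nat) := MkPadic {
  zp_seq : nat -> int;
  zp_coh : forall k : nat, (zp_seq k.+1 == zp_seq k %[mod (p ^ k)%:Z])%Z }.

Definition intvalued (f : {poly rat}) : Prop :=
  forall z : int, f.[z%:~R] \is a Num.int.

(* f(alpha) \in p^n Z_p, for f in Int(Z): f(alpha) is the p-adic limit of
   f(a_k), so this holds iff p^n divides the integer f(a_k) for all
   large enough k. *)
Definition val_in_pn (p n : nat) (alpha : padic p) (f : {poly rat}) : Prop :=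
  exists K : nat, forall k : nat, (K <= k)%N ->
    exists z : int, f.[(zp_seq alpha k)%:~R] = z%:~R /\ ((p ^ n)%:Z %| z)%Z.

Definition Mpow (p n : nat) (alpha : padic p) (f : {poly rat}) : Prop :=
  intvalued f /\ val_in_pn n alpha f.

Definition MpowZ (p n : nat) (alpha : padic p) (g : {poly int}) : Prop :=
  Mpow n alpha (map_poly intr g).

Definition ideal2 (u v : {poly int}) (g : {poly int}) : Prop :=
  exists r s : {poly int}, g = r * u + s * v.

Definition radical (I : {poly int} -> Prop) (g : {poly int}) : Prop :=
  exists m : nat, I (g ^+ m).

Definition primary (I : {poly int} -> Prop) : Prop :=
  ~ I 1 /\ forall f g : {poly int}, I (f * g) -> I f \/ radical I g.

Definition primary_for (I P : {poly int} -> Prop) : Prop :=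
  primary I /\ forall g, radical I g <-> P g.

(* Main.v *)
From HB Require Import structures.
From mathcomp Require Import all_boot all_order all_algebra.
Require Import Defs.
From Stdlib Require Import Setoid.
Import Order.TTheory GRing.Theory Num.Theory.
Local Open Scope ring_scope.

Lemma dvd_shift (d x y : int) : (d %| x - y)%Z -> (d %| x)%Z = (d %| y)%Z.
Proof.
move=> H; apply/idP/idP => Hx.
  have -> : y = x - (x - y) by rewrite opprB addrC subrK.
  by rewrite rpredB.
have -> : x = (x - y) + y by rewrite subrK.
by rewrite rpredD.
Qed.

Arguments dvd_shift {d x y}.

Lemma coh p (a : padic p) k m : (k <= m)%N ->
  ((p ^ k)%:Z %| zp_seq a m - zp_seq a k)%Z.
Proof.
elim: m => [|m IH]; first by rewrite leqn0 => /eqP->; rewrite subrr dvdz0.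
rewrite leq_eqVlt => /orP[/eqP<-|]; first by rewrite subrr dvdz0.
rewrite ltnS => Hkm; have H := IH Hkm.
have -> : zp_seq a m.+1 - zp_seq a k
   = (zp_seq a m.+1 - zp_seq a m) + (zp_seq a m - zp_seq a k)
  by rewrite addrA subrK.
rewrite rpredD //.
apply: (@dvdz_trans (p ^ m)%:Z).
  by rewrite dvdzE /= dvdn_exp2l.
by rewrite -eqz_mod_dvd; exact: zp_coh.
Qed.

Arguments coh {p} a {k m}.

Lemma horner_cong (g : {poly int}) (m x y : int) :
  (m %| x - y)%Z -> (m %| g.[x] - g.[y])%Z.
Proof.
move=> H.
have /factor_theorem [q Hq] : root (g - g.[y]%:P) y
  by rewrite rootE hornerD hornerN hornerC subrr.
have -> : g.[x] - g.[y] = (g - g.[y]%:P).[x] by rewrite hornerD hornerN hornerC.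
by rewrite Hq hornerM hornerXsubC dvdz_mull.
Qed.

Arguments horner_cong g {m x y}.

Lemma MpowZE p n (alpha : padic p) g :
  MpowZ n alpha g <-> ((p ^ n)%:Z %| g.[zp_seq alpha n])%Z.
Proof.
rewrite /MpowZ /Mpow /intvalued /val_in_pn.
have ev : forall z : int, (map_poly intr g).[z%:~R] = (g.[z])%:~R :> rat.
  by move=> z; rewrite horner_map.
split.
  move=> [_ [K HK]].
  have [z [Hz Hd]] := HK (maxn K n) (leq_maxl _ _).
  rewrite ev in Hz; move/intr_inj: Hz => Hz.
  have := horner_cong g (coh alpha (leq_maxr K n)).
  by rewrite Hz => /dvd_shift <-.
move=> H; split.
  by move=> z; rewrite ev intr_int.
exists n => k Hk; exists g.[zp_seq alpha k]; split; first exact: ev.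
by rewrite (dvd_shift (horner_cong g (coh alpha Hk))).
Qed.

Lemma ideal2E (m a : int) g :
  ideal2 m%:P ('X - a%:P) g <-> (m %| g.[a])%Z.
Proof.
split.
  move=> [r [s ->]].
  by rewrite hornerD !hornerM hornerC hornerXsubC subrr mulr0 addr0 dvdz_mull.
move=> /dvdzP [c Hc].
have /factor_theorem [q Hq] : root (g - g.[a]%:P) a
  by rewrite rootE hornerD hornerN hornerC subrr.
exists c%:P, q.
by rewrite -Hq -polyCM -Hc addrC subrK.
Qed.

Theorem mainTheorem7 (p n : nat) (alpha : padic p) :
  prime p -> (1 <= n)%N ->
  (forall a : int, (a == zp_seq alpha n %[mod (p ^ n)%:Z])%Z ->
     forall g : {poly int},
       MpowZ n alpha g <-> ideal2 ((p ^ n)%:Z)%:P ('X - a%:P) g)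
  /\ (forall j : nat, (j < p)%N -> (j%:Z == zp_seq alpha 1 %[mod p%:Z])%Z ->
       primary_for (MpowZ n alpha) (ideal2 (p%:Z)%:P ('X - (j%:Z)%:P)))
  /\ (forall beta : padic p,
       (forall g : {poly int}, MpowZ n alpha g <-> MpowZ n beta g) <->
       (zp_seq alpha n == zp_seq beta n %[mod (p ^ n)%:Z])%Z).
Proof.
move=> pr n1.
have pp : (p %| p ^ n)%N by rewrite -{1}(expn1 p) dvdn_exp2l.
split.
  move=> a Ha g; rewrite MpowZE ideal2E.
  rewrite eqz_mod_dvd in Ha.
  by rewrite (dvd_shift (horner_cong g Ha)).
split.
  move=> j _ Hj.
  set an := zp_seq alpha n.
  have Hjan : (p%:Z %| j%:Z - an)%Z.
    have H1 := coh alpha n1; rewrite expn1 in H1.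
    rewrite eqz_mod_dvd in Hj.
    have -> : j%:Z - an = (j%:Z - zp_seq alpha 1) - (an - zp_seq alpha 1)
      by rewrite opprB addrA subrK.
    by rewrite rpredB.
  have rad : forall g, radical (MpowZ n alpha) g <-> (p%:Z %| g.[an])%Z.
    move=> g; rewrite /radical; split.
      move=> [m]; rewrite MpowZE horner_exp -/an !dvdzE abszX /= => H.
      have : (p %| `|g.[an]| ^ m)%N by exact: dvdn_trans pp H.
      by rewrite Euclid_dvdX // => /andP[].
    move=> H; exists n; rewrite MpowZE horner_exp -/an !dvdzE abszX /=.
    by apply: dvdn_exp2r; rewrite dvdzE in H.
  split; last first.
    move=> g; rewrite rad ideal2E.
    by rewrite (dvd_shift (horner_cong g Hjan)).
  split.
    rewrite MpowZE hornerC dvdz1 /= => /eqP H1.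
    by move: pp; rewrite H1 dvdn1 => /eqP H2; rewrite H2 in pr.
  move=> f g; rewrite MpowZE hornerM -/an => H.
  case Hg: (p%:Z %| g.[an])%Z; first by right; apply/rad.
  left; rewrite MpowZE -/an.
  move: H; rewrite !dvdzE abszM /= Gauss_dvdl //.
  apply: coprimeXl; rewrite prime_coprime //; by move: Hg; rewrite dvdzE /= => ->.
move=> beta; split.
  move=> H.
  have := (H ('X - (zp_seq alpha n)%:P)).1.
  rewrite !MpowZE !hornerXsubC subrr dvdz0 => /(_ isT) Hb.
  by rewrite eqz_mod_dvd -opprB rpredN.
rewrite eqz_mod_dvd => Hab g.
rewrite !MpowZE.
by rewrite (dvd_shift (horner_cong g Hab)).
Qed.
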